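(* Let $\gamma>0$ and $\theta\in\mathbb R$. For each $L\ge2$ let $w_1,\dots,w_L\in\mathbb R$ with $|w_j|\ge2\gamma$ for all $j$, and consider on $\mathcal F(\mathbb C^L)$ $$\mathbf H_L=\sum_{j=1}^{L-1}w_j\,i{\mathfrak b}_{2j}{\mathfrak b}_{2j+1}+w_L\,i{\mathfrak b}_{2L}{\mathfrak b}_1 .$$ Then $\mathbf H_L$ has a spectral gap above its ground state energy that is bounded below uniformly in the length $L$ of the chain.
   Context: $\mathcal F(\mathbb C^L)$ is the fermionic Fock space with CAR operators ${\mathfrak a}_j$, $j=1,\dots,L$. Majorana operators: ${\mathfrak b}_{2j-1}=e^{i\theta/2}{\mathfrak a}_j+e^{-i\theta/2}{\mathfrak a}_j^*$, ${\mathfrak b}_{2j}=-ie^{i\theta/2}{\mathfrak a}_j+ie^{-i\theta/2}{\mathfrak a}_j^*$; in terms of these, $\mathbf H_L$ is the closed (periodic) Kitaev chain $\sum_{j=1}^{L-1}w_j[-({\mathfrak a}_j^*{\mathfrak a}_{j+1}+{\mathfrak a}_{j+1}^*{\mathfrak a}_j)+e^{i\theta}{\mathfrak a}_j{\mathfrak a}_{j+1}+e^{-i\theta}{\mathfrak a}_{j+1}^*{\mathfrak a}_j^*]+w_L[-({\mathfrak a}_L^*{\mathfrak a}_1+{\mathfrak a}_1^*{\mathfrak a}_L)+e^{i\theta}{\mathfrak a}_L{\mathfrak a}_1+e^{-i\theta}{\mathfrak a}_1^*{\mathfrak a}_L^*]$ with site-dependent couplings. The spectral gap above the ground state energy is the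 distance between the lowest eigenvalue and the next distinct eigenvalue. *)

(* Defs.v *)
From HB Require Import structures.
From mathcomp Require Import all_boot all_order all_algebra.
From mathcomp Require Import reals trigo.
From mathcomp.real_closed Require Import complex.
Set Implicit Arguments. Unset Strict Implicit. Unset Printing Implicit Defensive.
Import Order.TTheory GRing.Theory Num.Theory.
Local Open Scope ring_scope.
Local Open Scope complex_scope.

Section Fock.
Variable R : realType.
Local Notation C := (R[i]).

(* Fock space F(C^L) ~ C^(2^L): basis vector n : 'I_(2^L) is the occupation
   configuration whose mode k (0-based, k < L) is occupied iff bit k of n is 1. *)
Definition occ (n k : nat) : bool := odd (n %/ 2 ^ k).

Definition jwsign (n k : nat) : C := (-1) ^+ (\sum_(i < k) occ n i).

(* Annihilation operator a_{k+1} (paper's 1-based index j = k+1):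
   a_k |n> = jwsign n k |n - 2^k> if mode k occupied, 0 otherwise. *)
Definition annih (L : nat) (k : 'I_L) : 'M[C]_(2 ^ L) :=
  \matrix_(m, n) (if occ n k && (nat_of_ord m == nat_of_ord n - 2 ^ k)%N
                  then jwsign n k else 0).

Definition adjmx (n : nat) (A : 'M[C]_n) : 'M[C]_n := map_mx Num.conj A^T.

Definition creat (L : nat) (k : 'I_L) : 'M[C]_(2 ^ L) := adjmx (annih k).

Definition phase (theta : R) : C := cos (theta / 2) +i* sin (theta / 2).

(* Majorana operators, 0-based mode k corresponds to paper's j = k+1:
   bodd k  = b_{2j-1} = e^{i th/2} a_j + e^{-i th/2} a_j^*
   beven k = b_{2j}   = -i e^{i th/2} a_j + i e^{-i th/2} a_j^*              *)
Definition bodd (theta : R) (L : nat) (k : 'I_L) : 'M[C]_(2 ^ L) :=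
  phase theta *: annih k + Num.conj (phase theta) *: creat k.
Definition beven (theta : R) (L : nat) (k : 'I_L) : 'M[C]_(2 ^ L) :=
  (- 'i * phase theta) *: annih k + ('i * Num.conj (phase theta)) *: creat k.

(* H_L = sum_{j=1}^{L-1} w_j i b_{2j} b_{2j+1} + w_L i b_{2L} b_1 ;
   in 0-based form: sum_{k<L} w_k i beven(k) bodd(k+1 mod L). *)
Definition HL (theta : R) (L : nat) (w : 'I_L -> R) : 'M[C]_(2 ^ L) :=
  \sum_(k < L) (((w k)%:C * 'i) *: (beven theta k *m bodd theta (ordS k))).

(* A has ground state energy E0 (its lowest eigenvalue; the order on C is
   the numClosedField order: x <= y iff y - x is a nonnegative real). *)
Definition ground_energy (n : nat) (A : 'M[C]_n) (E0 : C) : Prop :=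
  eigenvalue A E0 /\ forall l, eigenvalue A l -> E0 <= l.

Definition spectral_gap_ge (n : nat) (A : 'M[C]_n) (c : R) : Prop :=
  exists E0, [/\ ground_energy A E0,
    (exists l, eigenvalue A l /\ l != E0) &
    (forall l, eigenvalue A l -> l != E0 -> E0 + c%:C <= l)].

End Fock.

(* Main.v *)
Require Import Defs.
From HB Require Import structures.
From mathcomp Require Import all_boot all_order all_algebra.
From mathcomp Require Import reals trigo.
From mathcomp.real_closed Require Import complex.
From mathcomp Require Import zify ring lra.
Import Order.TTheory GRing.Theory Num.Theory.

Lemma occ_divl n l k : (l <= k)%N -> occ n k = odd (n %/ 2 ^ l %/ 2 ^ (k - l)).
Proof. by move=> lk; rewrite /occ -divnMA -expnD subnKC. Qed.

Lemma occ_addl n l : occ (n + 2 ^ l) l = ~~ occ n l.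
Proof.
rewrite /occ addnC -{1}(mul1n (2 ^ l)) divnMDl ?expn_gt0 //=.
Qed.

Lemma occD n l k : ~~ occ n l -> occ (n + 2 ^ l) k = occ n k (+) (k == l).
Proof.
move=> hn.
case: (ltngtP k l) => [kl|lk|->]; last by rewrite occ_addl (negbTE hn).
- rewrite addbF /occ -(subnK (ltnW kl)) expnD addnC divnMDl ?expn_gt0 //.
  by rewrite oddD oddX subn_eq0 leqNgt kl /= .
- rewrite addbF (occ_divl _ _ _ (ltnW lk)) (occ_divl n _ _ (ltnW lk)).
  rewrite addnC -{1}(mul1n (2 ^ l)) divnMDl ?expn_gt0 // addnC.
  have -> : (k - l = (k - l).-1.+1)%N by lia.
  rewrite expnS !divnMA !divn2.
  rewrite halfD; move: hn; rewrite /occ => /negbTE ->; by rewrite add0n addn0.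
Qed.

Lemma occ_cases n l : occ n l -> exists2 m, ~~ occ m l & n = m + 2 ^ l.
Proof.
move=> h; exists (n - 2 ^ l); last first.
  rewrite subnK //; rewrite -divn_gt0 ?expn_gt0 //.
  by move: h; rewrite /occ; case: (n %/ 2 ^ l).
have le: (2 ^ l <= n)%N.
  by rewrite -divn_gt0 ?expn_gt0 //; move: h; rewrite /occ; case: (n %/ 2 ^ l).
by move: h; rewrite -{1}(subnK le) occ_addl.
Qed.

Lemma occ_bound n k L : ~~ occ n k -> (n < 2 ^ L)%N -> (k < L)%N -> (n + 2 ^ k < 2 ^ L)%N.
Proof.
move=> hk hn kL.
have p0 : (0 < 2 ^ k)%N by rewrite expn_gt0.
have eL : (2 ^ L = 2 ^ (L - k) * 2 ^ k)%N by rewrite -expnD subnK // ltnW.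
set h := n %/ 2 ^ k.
have hlt : (h < 2 ^ (L - k))%N by rewrite ltn_divLR // -eL.
have hne : h.+1 != 2 ^ (L - k).
  apply/eqP=> e; move: hk; rewrite /occ -/h.
  have : odd h.+1 = odd (2 ^ (L - k)) by rewrite e.
  by rewrite oddX /= subn_eq0 leqNgt kL /= => ->.
have h2 : (h.+2 <= 2 ^ (L - k))%N by rewrite ltn_neqAle hne hlt.
have nc : (n < h.+1 * 2 ^ k)%N by rewrite ltn_ceil.
rewrite eL; apply: (leq_trans _ (leq_mul h2 (leqnn _))).
rewrite mulSn addnC; lia.
Qed.

Local Open Scope ring_scope.
Section J.
Variable R : realType.
Local Notation C := (R[i]).

Lemma sum_occD n l k : ~~ occ n l ->
  (\sum_(i < k) occ (n + 2 ^ l) i = \sum_(i < k) occ n i + (l < k))%N.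
Proof.
move=> hn.
rewrite (eq_bigr (fun i : 'I_k => occ n i + (i == l :> nat))%N); last first.
  move=> i _; rewrite occD //; case: eqP => [->|]; first by rewrite (negbTE hn).
  by rewrite addbF addn0.
rewrite big_split /=; congr (_ + _)%N.
rewrite (eq_bigr (fun i : 'I_k => if i == l :> nat then 1 else 0)%N); last by move=> i _; case: eqP.
rewrite -big_mkcond /= (big_ord1_eq _ (fun _ => 1%N)).
by case: (l < k)%N.
Qed.

Lemma jwD n l k : ~~ occ n l ->
  jwsign R (n + 2 ^ l) k = jwsign R n k * (if (l < k)%N then -1 else 1).
Proof.
move=> hn; rewrite /jwsign sum_occD // exprD.
by case: (l < k)%N; rewrite ?expr1 ?expr0.
Qed.

Lemma jw_sq n k : jwsign R n k * jwsign R n k = 1.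
Proof. by rewrite /jwsign -exprD -signr_odd oddD addbb expr0. Qed.

Lemma jw_conj n k : Num.conj (jwsign R n k) = jwsign R n k.
Proof. by rewrite /jwsign rmorphXn rmorphN1. Qed.
End J.
Arguments occ_cases {n l}.
Arguments occD {n l} k _.
Arguments jwD {R n l} k _.


Section M.
Variable R : realType.
Local Notation C := (R[i]).
Variable L : nat.
Local Notation N := (2 ^ L)%N.
Local Notation jw := (jwsign R).

Definition cmx (P : nat -> bool) (f : nat -> nat) (c : nat -> C) : 'M[C]_N :=
  \matrix_(m, n) (if P n && (m == f n :> nat) then c n else 0).

Lemma cmxM (P1 : nat -> bool) f1 c1 (P2 : nat -> bool) (f2 : nat -> nat) c2 :
  (forall n, (n < N)%N -> P2 n -> (f2 n < N)%N) ->
  cmx P1 f1 c1 *m cmx P2 f2 c2 =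
  cmx (fun n => P2 n && P1 (f2 n)) (fun n => f1 (f2 n)) (fun n => c1 (f2 n) * c2 n).
Proof.
move=> H; rewrite /cmx; apply/matrixP => m n; rewrite !mxE.
case hP: (P2 n) => /=; last first.
  by rewrite big1 // => p _; rewrite !mxE hP /= mulr0.
have hf := H n (ltn_ord n) hP.
rewrite (bigD1 (Ordinal hf)) //= big1 ?addr0 => [|p hp]; last first.
  rewrite !mxE hP /=.
  have -> : (p == f2 n :> nat) = false.
    by apply/negbTE; move: hp; apply: contra => /eqP e; apply/eqP/val_inj.
  by rewrite mulr0.
rewrite !mxE hP eqxx /=.
by case: (P1 (f2 n)) => /=; case: (m == _ :> nat); rewrite ?mul0r.
Qed.

Definition an (k : nat) := cmx (fun n => occ n k) (fun n => n - 2 ^ k)%N (fun n => jw n k).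
Definition cr (k : nat) := cmx (fun n => ~~ occ n k) (fun n => n + 2 ^ k)%N (fun n => jw n k).

Lemma annihE (k : 'I_L) : annih R k = an k.
Proof. by apply/matrixP => m n; rewrite !mxE. Qed.

Lemma creatE (k : 'I_L) : creat R k = cr k.
Proof.
apply/matrixP => m n; rewrite !mxE /=.
case hm: (occ m k) => /=.
  have [m' hm' em] := occ_cases hm.
  rewrite em addnK eqn_add2r.
  have [->|ne] := eqVneq (nat_of_ord n) m'; last by rewrite andbF rmorph0.
  by rewrite hm' andbT jw_conj (jwD _ hm') ltnn mulr1.
rewrite rmorph0.
case hn: (occ n k) => //=.
case: eqP => // e; move: hm; rewrite e occ_addl hn //.
Qed.

Lemma an_bound k n : (n < N)%N -> occ n k -> (n - 2 ^ k < N)%N.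
Proof. move=> h _; exact: leq_ltn_trans (leq_subr _ _) h. Qed.

Lemma cr_bound k n : (k < L)%N -> (n < N)%N -> ~~ occ n k -> (n + 2 ^ k < N)%N.
Proof. by move=> kL h o; apply: occ_bound. Qed.

Lemma sgn_swap (k l : nat) : k != l ->
  (if (k < l)%N then -1 else 1) + (if (l < k)%N then -1 else 1) = 0 :> C.
Proof.
move=> kl; case: ltngtP => //= h; try by rewrite subrr.
  by rewrite addrC subrr.
by move: kl; rewrite h eqxx.
Qed.

Lemma an_anti k l : an k *m an l + an l *m an k = 0.
Proof.
rewrite !cmxM; try by move=> n h o; apply: an_bound.
apply/matrixP => m n; rewrite !mxE.
case: (eqVneq k l) => [<-|kl].
  case h: (occ n k) => //=; last by rewrite addr0.
  have [n' hn' ->] := occ_cases h.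
  by rewrite addnK (negbTE hn') addr0.
case h1: (occ n l) => /=; last first.
  case h2: (occ n k) => //=; last by rewrite addr0.
  have [n' hn' e] := occ_cases h2.
  move: h1; rewrite e addnK (occD _ hn') (eq_sym l) (negbTE kl) addbF => -> /=.
  by rewrite addr0.
have [n' hn' e] := occ_cases h1.
rewrite e addnK (occD _ hn') (negbTE kl) addbF.
case h2: (occ n' k) => /=; last by rewrite addr0.
have [n'' hn'' e'] := occ_cases h2.
have hl'' : ~~ occ n'' l.
  by move: hn'; rewrite e' (occD _ hn'') (eq_sym l) (negbTE kl) addbF.
rewrite e' addnK -addnA [(2 ^ k + 2 ^ l)%N]addnC addnA addnK.
have hl' : ~~ occ (n'' + 2 ^ l) k by rewrite (occD _ hl'') (negbTE kl) addbF.
rewrite occ_addl hl'' /= addnK.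
case: (m == n'' :> nat); last by rewrite addr0.
rewrite !(jwD _ hl') !(jwD _ hl'') !(jwD _ hn'') !ltnn !mulr1.
have := sgn_swap _ _ kl.
set a := (if (k < l)%N then _ else _); set b := (if (l < k)%N then _ else _) => hab.
rewrite -[RHS](mulr0 (jw n'' k * jw n'' l)) -hab; ring.
Qed.

Lemma sgn_mul (k l : nat) : k != l ->
  (if (k < l)%N then -1 else 1) * (if (l < k)%N then -1 else 1) = -1 :> C.
Proof.
move=> kl; case: ltngtP => //= h; rewrite ?mulr1 ?mul1r //.
by move: kl; rewrite h eqxx.
Qed.

Lemma an_cr k l : (l < L)%N ->
  an k *m cr l + cr l *m an k = if k == l then 1%:M else 0.
Proof.
move=> lL; rewrite !cmxM; [|by move=> n h o; apply: an_bound|by move=> n h o; apply: cr_bound].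
apply/matrixP => m n.
case: (eqVneq k l) => [<-|kl].
  rewrite /cmx !mxE.
  have -> : (m == n) = (nat_of_ord m == nat_of_ord n) by [].
  case h: (occ n k) => /=.
    have [n' hn' e] := occ_cases h.
    rewrite e addnK hn' /= add0r.
    case: (m == _ :> nat) => //.
    by rewrite (jwD _ hn') ltnn mulr1 mulrC jw_sq.
  rewrite occ_addl h addnK /= addr0.
  case: (m == _ :> nat) => //.
  by rewrite (jwD _ (negbT h)) ltnn mulr1 jw_sq.
rewrite /cmx !mxE.
case h: (occ n k) => /=; last first.
  case hl: (occ n l) => /=; first by rewrite addr0.
  by rewrite (occD _ (negbT hl)) h (negbTE kl) /= addr0.
have [n' hn' e] := occ_cases h.
rewrite e addnK.
have hl1 : occ (n' + 2 ^ k) l = occ n' l by rewrite (occD _ hn') (eq_sym l) (negbTE kl) addbF.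
rewrite hl1.
case hl: (occ n' l) => /=; first by rewrite addr0.
have hk' : ~~ occ (n' + 2 ^ k) l by rewrite hl1 hl.
rewrite (occD _ hk') (negbTE kl) addbF occ_addl hn' /=.
rewrite -addnA [(2 ^ k + 2 ^ l)%N]addnC addnA addnK.
case: (m == _ :> nat); last by rewrite addr0.
have hl' : ~~ occ (n' + 2 ^ l) k by rewrite (occD _ (negbT hl)) (negbTE kl) addbF hn'.
rewrite (jwD _ hl') (jwD _ (negbT hl)) (jwD _ hn') (jwD _ hn') !ltnn !mulr1.
have := sgn_mul _ _ kl.
set a := (if (k < l)%N then _ else _); set b := (if (l < k)%N then _ else _) => hab.
have -> : jw n' k * b * (jw n' l * a) = jw n' k * jw n' l * (a * b) by ring.
rewrite hab; ring.
Qed.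
End M.

Set Implicit Arguments. Unset Strict Implicit.

Section Abs.
Variable Rg : pzRingType.
Implicit Types x y z : Rg.

Lemma anti_comm2 x y z : x * y = - (y * x) -> x * z = - (z * x) -> GRing.comm x (y * z).
Proof.
rewrite /GRing.comm => h1 h2.
by rewrite mulrA h1 mulNr -mulrA h2 mulrN opprK mulrA.
Qed.

Lemma anti_mul x y z : x * y = - (y * x) -> GRing.comm x z -> x * (y * z) = - ((y * z) * x).
Proof.
rewrite /GRing.comm => h1 h2.
by rewrite mulrA h1 mulNr -mulrA h2 mulrA.
Qed.

Variable L : nat.
Variable b : bool -> 'I_L -> Rg.
Variables c h : Rg.
Hypothesis hb2 : forall t k, b t k * b t k = 1.
Hypothesis hba : forall t k t' l, (t, k) != (t', l) -> b t k * b t' l = - (b t' l * b t k).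
Hypothesis hc : forall x, GRing.comm c x.
Hypothesis hcc : c * c = -1.
Hypothesis hh : forall x, GRing.comm h x.
Hypothesis hh2 : h + h = 1.

Definition S j := c * (b true j * b false (ordS j)).

Lemma S_sq j : S j * S j = 1.
Proof.
rewrite /S.
set u := b true j; set v := b false (ordS j).
have hvu : v * u = - (u * v) by apply: hba.
have e1 : (u * v) * (u * v) = -1.
  by rewrite -mulrA (mulrA v) hvu mulNr mulrN !mulrA hb2 mul1r hb2.
by rewrite -mulrA (mulrA (u * v) c) -(hc (u * v)) -mulrA e1 mulrA hcc mulrNN mulr1.
Qed.

Lemma uv_comm j k : GRing.comm (b true j * b false (ordS j)) (b true k * b false (ordS k)).
Proof.
have [->|jk] := eqVneq j k; first exact: commr_refl.
apply: commrM; apply: commr_sym; apply: anti_comm2; apply: hba;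
  by rewrite xpair_eqE /= ?(inj_eq (@ordS_inj _)) // eq_sym.
Qed.

Lemma S_comm j k : GRing.comm (S j) (S k).
Proof.
rewrite /S; apply: commrM; first exact: commr_sym (hc _).
apply: commr_sym; apply: commrM; first exact: commr_sym (hc _).
exact: uv_comm.
Qed.

Lemma uS_anti j : b true j * S j = - (S j * b true j).
Proof.
rewrite /S mulrA -(hc (b true j)) -!mulrA -mulrN; congr (_ * _).
have hvu : b false (ordS j) * b true j = - (b true j * b false (ordS j)) by apply: hba.
by rewrite mulrA hb2 mul1r hvu mulrN mulrA hb2 mul1r opprK.
Qed.

Lemma uS_comm j k : j != k -> GRing.comm (b true j) (S k).
Proof.
move=> jk; rewrite /S; apply: commrM; first exact: commr_sym (hc _).
apply: anti_comm2; apply: hba.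
  by rewrite xpair_eqE eqxx /=.
by [].
Qed.

Definition tS (s : 'I_L -> bool) j : Rg := if s j then 1 else -1.
Definition flip (s : 'I_L -> bool) k := fun j => if j == k then ~~ s j else s j.

Lemma tS_comm s j x : GRing.comm (tS s j) x.
Proof. by rewrite /tS; case: (s j); [apply: commr_sym; apply: commr1 | apply: commr_sym; apply: commrN1]. Qed.

Lemma tS_sq s j : tS s j * tS s j = 1.
Proof. by rewrite /tS; case: (s j); rewrite ?mulr1 ?mulrNN ?mulr1. Qed.

Lemma tS_flip s k : tS (flip s k) k = - tS s k.
Proof. by rewrite /tS /flip eqxx; case: (s k); rewrite ?opprK. Qed.

Definition Q s j := h * (1 + tS s j * S j).
Definition P s (xs : seq 'I_L) := foldr (fun j M => Q s j * M) 1 xs.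

Lemma Q_comm_S s j k : GRing.comm (Q s j) (S k).
Proof.
rewrite /Q; apply: commr_sym; apply: commrM; first exact: commr_sym (hh _).
apply: commrD; first exact: commr1.
apply: commrM; first exact: commr_sym (tS_comm _ _ _).
exact: S_comm.
Qed.

Lemma Q_comm s j s' k : GRing.comm (Q s j) (Q s' k).
Proof.
rewrite {2}/Q; apply: commrM; first exact: commr_sym (hh _).
apply: commrD; first exact: commr1.
apply: commrM; first exact: commr_sym (tS_comm _ _ _).
exact: Q_comm_S.
Qed.

Lemma P_comm_S s xs k : GRing.comm (P s xs) (S k).
Proof.
elim: xs => [|j xs IH] /=; first exact: commr_sym (commr1 _).
apply: commr_sym; apply: commrM; apply: commr_sym => //; exact: Q_comm_S.
Qed.

Lemma P_comm_Q s xs s' k : GRing.comm (P s xs) (Q s' k).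
Proof.
elim: xs => [|j xs IH] /=; first exact: commr_sym (commr1 _).
apply: commr_sym; apply: commrM; apply: commr_sym => //; exact: Q_comm.
Qed.

Lemma QS s j : Q s j * S j = tS s j * Q s j.
Proof.
rewrite /Q [RHS]mulrA -(hh (tS s j)) -!mulrA; congr (_ * _).
rewrite mulrDl mul1r -mulrA S_sq mulr1 mulrDr mulr1 mulrA tS_sq mul1r.
by rewrite addrC.
Qed.

Lemma PS s xs j : j \in xs -> P s xs * S j = tS s j * P s xs.
Proof.
elim: xs => [|k xs IH] //=; rewrite inE => /orP [/eqP ->|jx].
  by rewrite -mulrA P_comm_S mulrA QS mulrA.
by rewrite -mulrA IH // mulrA -(tS_comm s j (Q s k)) mulrA.
Qed.


Lemma PHc s xs (a : 'I_L -> Rg) : (forall j x, GRing.comm (a j) x) -> (forall j, j \in xs) ->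
  P s xs * (\sum_j a j * S j) = (\sum_j a j * tS s j) * P s xs.
Proof.
move=> ha hx; rewrite mulr_sumr mulr_suml; apply: eq_bigr => j _.
by rewrite mulrA -(ha j (P s xs)) -mulrA PS // !mulrA.
Qed.

Lemma Q_flip_sum s k : Q s k + Q (flip s k) k = 1.
Proof.
rewrite /Q tS_flip -mulrDr mulNr addrACA subrr addr0.
by rewrite mulrDr mulr1.
Qed.

Lemma P_flip s k xs : k \notin xs -> P (flip s k) xs = P s xs.
Proof.
elim: xs => [|j xs IH] //=; rewrite inE negb_or => /andP [kj kx].
rewrite IH //; congr (_ * _); rewrite /Q /tS /flip eq_sym (negbTE kj) //.
Qed.

Lemma conj_Q s k : b true k * Q s k * b true k = Q (flip s k) k.
Proof.
rewrite /Q tS_flip mulrA -(hh (b true k)) -!mulrA; congr (_ * _).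
rewrite mulrDl mul1r mulrDr hb2; congr (_ + _).
rewrite -mulrA mulrA -(tS_comm s k (b true k)) -mulrA (mulrA (b true k) (S k)) uS_anti.
by rewrite mulNr -mulrA hb2 mulr1 mulrN mulNr.
Qed.

Hypothesis h10 : (1 : Rg) != 0.

Lemma P_neq0 s xs : uniq xs -> P s xs != 0.
Proof.
elim: xs s => [|k xs IH] s /=; first by [].
move=> /andP [kx ux]; apply/eqP => h0.
have hP : GRing.comm (b true k) (P s xs).
  elim: xs kx {IH ux h0} => [|j xs IH2] /=; first by move=> _; exact: commr1.
  rewrite inE negb_or => /andP [kj kx]; apply: commrM; last exact: IH2.
  apply: commrM; first exact: commr_sym (hh _).
  apply: commrD; first exact: commr1.
  apply: commrM; first exact: commr_sym (tS_comm _ _ _).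
  exact: uS_comm.
have h1 : Q (flip s k) k * P s xs = 0.
  by rewrite -conj_Q -mulrA hP mulrA -(mulrA (b true k)) h0 mulr0 mul0r.
have := IH s ux.
by rewrite -(mul1r (P s xs)) -(Q_flip_sum s k) mulrDl h0 h1 addr0 eqxx.
Qed.

Lemma P_vec X xs : uniq xs -> X != 0 -> exists s, X * P s xs != 0.
Proof.
elim: xs => [|k xs IH] /=; first by move=> _ hX; exists (fun _ => true); rewrite mulr1.
move=> /andP [kx ux] hX; have [s hs] := IH ux hX.
have hsum : X * P s xs = X * P s xs * Q s k + X * P s xs * Q (flip s k) k.
  by rewrite -mulrDr Q_flip_sum mulr1.
case hz: (X * P s xs * Q s k == 0).
  exists (flip s k); rewrite P_flip // -(P_comm_Q s xs (flip s k) k) mulrA.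
  apply: contra hs => /eqP h0; rewrite hsum h0 (eqP hz) addr0 //.
exists s; rewrite -(P_comm_Q s xs s k) mulrA hz //.
Qed.
End Abs.

Unset Implicit Arguments. Set Strict Implicit.


Section Fin.
Variable R : realType.
Local Notation C := (R[i]).
Variables (theta : R) (L : nat).
Local Notation N := (2 ^ L)%N.
Local Notation M := 'M[C]_N.

Lemma adjmxM (A B : M) : adjmx (A *m B) = adjmx B *m adjmx A.
Proof. by rewrite /adjmx trmx_mul map_mxM. Qed.
Lemma adjmxD (A B : M) : adjmx (A + B) = adjmx A + adjmx B.
Proof. by rewrite /adjmx raddfD map_mxD. Qed.
Lemma adjmx0 : adjmx (0 : M) = 0.
Proof. by rewrite /adjmx trmx0 map_mx0. Qed.

Lemma aa (k l : 'I_L) : annih R k *m annih R l + annih R l *m annih R k = 0.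
Proof. by rewrite !annihE an_anti. Qed.
Lemma cc (k l : 'I_L) : creat R k *m creat R l + creat R l *m creat R k = 0.
Proof. by rewrite /creat -!adjmxM -adjmxD addrC aa adjmx0. Qed.
Lemma ac (k l : 'I_L) :
  annih R k *m creat R l + creat R l *m annih R k = ((k == l)%:R : C) *: 1%:M.
Proof.
rewrite annihE creatE an_cr //.
have -> : (k == l) = (nat_of_ord k == nat_of_ord l) by [].
by case: (_ == _); rewrite ?scale1r ?scale0r.
Qed.

Lemma anti_lin (a al c cl : M) (d1 d2 x y x' y' : C) :
  a *m al + al *m a = 0 -> c *m cl + cl *m c = 0 ->
  a *m cl + cl *m a = d1 *: 1%:M -> al *m c + c *m al = d2 *: 1%:M ->
  (x *: a + y *: c) *m (x' *: al + y' *: cl) + (x' *: al + y' *: cl) *m (x *: a + y *: c)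
  = (x * y' * d1 + y * x' * d2) *: 1%:M.
Proof.
move=> h1 h2 h3 h4.
rewrite !mulmxDl !mulmxDr -!scalemxAl -!scalemxAr !scalerA.
move: h1 h2 h3 h4.
move: (a *m al) (al *m a) (c *m cl) (cl *m c) (a *m cl) (cl *m a) (al *m c) (c *m al)
  => P1 P2 P3 P4 P5 P6 P7 P8 h1 h2 h3 h4.
apply/matrixP => i j.
move/matrixP: h1 => /(_ i j); move/matrixP: h2 => /(_ i j).
move/matrixP: h3 => /(_ i j); move/matrixP: h4 => /(_ i j).
rewrite !mxE => h4 h3 h2 h1.
move: (canRL (addrK _) h1) (canRL (addrK _) h2) (canRL (addrK _) h3) (canRL (addrK _) h4).
move=> -> -> -> ->.
ring.
Qed.


Definition ph := phase theta.
Definition alpha (t : bool) : C := if t then - 'i%C * ph else ph.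
Definition beta (t : bool) : C := if t then 'i%C * Num.conj ph else Num.conj ph.
Definition B (t : bool) (k : 'I_L) : M := if t then beven theta k else bodd theta k.

Lemma BE t k : B t k = alpha t *: annih R k + beta t *: creat R k.
Proof. by case: t. Qed.

Lemma ph_conj : ph * Num.conj ph = 1.
Proof.
rewrite -normCK /ph /phase normc_def /= -rmorphXn sqr_sqrtr ?addr_ge0 ?sqr_ge0 // cos2Dsin2 //.
Qed.

Lemma ii : 'i%C * 'i%C = -1 :> C.
Proof. by rewrite -expr2 sqr_i. Qed.

Lemma B_ac t k t' l :
  B t k *m B t' l + B t' l *m B t k = (if (t == t') && (k == l) then 2 else 0) *: 1%:M.
Proof.
rewrite !BE (anti_lin _ _ _ _ _ _ _ _ _ _ (aa k l) (cc k l) (ac k l) (ac l k)); congr (_ *: _).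
case: eqP => [e|kl]; last first.
  case: eqP => [e'|_]; first by case: kl.
  by rewrite andbF !mulr0 addr0.
case: eqP => [_|/(_ (esym e))] //; rewrite !andbT !mulr1.
have hp := ph_conj; have hi := ii.
case: t; case: t' => /=.
- transitivity (- 2 * ('i%C * 'i%C) * (ph * Num.conj ph)); first by ring.
  by rewrite hi hp; ring.
- by ring.
- by ring.
- transitivity (2 * (ph * Num.conj ph)); first by ring.
  by rewrite hp mulr1.
Qed.

Lemma B_sq t k : B t k *m B t k = 1%:M.
Proof.
have := B_ac t k t k; rewrite !eqxx /= => h.
apply: (@scalerI _ _ (2 : C)); first by rewrite pnatr_eq0.
by rewrite scaler_nat mulr2n h.
Qed.

Lemma B_anti t k t' l : (t, k) != (t', l) -> B t k *m B t' l = - (B t' l *m B t k).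
Proof.
move=> ne; have := B_ac t k t' l.
have -> : (t == t') && (k == l) = false by apply/negbTE; rewrite -xpair_eqE.
by rewrite scale0r => /eqP; rewrite addr_eq0 => /eqP.
Qed.


Definition bb : bool -> 'I_L -> M := fun t k => B t k.
Definition cI : M := ('i%C)%:M.
Definition hI : M := ((2 : C)^-1)%:M.

Lemma hb2 t k : bb t k * bb t k = 1.
Proof. exact: B_sq. Qed.
Lemma hba t k t' l : (t, k) != (t', l) -> bb t k * bb t' l = - (bb t' l * bb t k).
Proof. exact: B_anti. Qed.
Lemma scal_comm (a : C) (x : M) : GRing.comm (a%:M) x.
Proof. by rewrite /GRing.comm -mulmxE scalar_mxC. Qed.
Lemma hc x : GRing.comm cI x. Proof. exact: scal_comm. Qed.
Lemma hh x : GRing.comm hI x. Proof. exact: scal_comm. Qed.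
Lemma hcc : cI * cI = -1.
Proof. by rewrite /cI -mulmxE -scalar_mxM ii raddfN. Qed.
Lemma hh2 : hI + hI = 1.
Proof.
have e : ((2 : C)^-1 + (2 : C)^-1) = 1 by field.
by rewrite /hI -raddfD /= e.
Qed.
Lemma h10 : (1 : M) != 0.
Proof.
have i0 : (0 < N)%N by rewrite expn_gt0.
apply/eqP => /matrixP /(_ (Ordinal i0) (Ordinal i0)); rewrite !mxE eqxx /=.
by move/eqP; rewrite oner_eq0.
Qed.

Definition Sm j := S bb cI j.
Definition Pm s := P bb cI hI s (enum 'I_L).

Local Open Scope complex_scope.
Variable w : 'I_L -> R.
Definition Er (s : 'I_L -> bool) : R := \sum_j w j * (if s j then 1 else -1).

Lemma HLE : HL theta w = \sum_j ((w j)%:C)%:M * Sm j.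
Proof.
rewrite /HL; apply: eq_bigr => j _; rewrite /Sm /S /cI /bb /B /=.
by rewrite -!mulmxE !mul_scalar_mx scalerA.
Qed.

Lemma sum_tS s : \sum_j ((w j)%:C)%:M * tS M s j = ((Er s)%:C)%:M.
Proof.
rewrite /Er rmorph_sum raddf_sum; apply: eq_bigr => j _; rewrite /tS.
case: (s j); first by rewrite !mulr1.
by rewrite !mulrN1 rmorphN raddfN.
Qed.

Lemma PHm s : Pm s * HL theta w = ((Er s)%:C)%:M * Pm s.
Proof.
rewrite HLE /Pm (PHc hb2 hba hc hcc hh s) ?sum_tS //.
- by move=> j x; exact: scal_comm.
- by move=> j; rewrite mem_enum.
Qed.

Lemma HP_comm s : GRing.comm (Pm s) (HL theta w).
Proof.
rewrite HLE; apply: commr_sum => j _; apply: commrM.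
  exact: commr_sym (scal_comm _ _).
exact: (P_comm_S hba hc hh).
Qed.

Lemma eig_of_P s : Pm s != 0 -> eigenvalue (HL theta w) (Er s)%:C.
Proof.
move=> nz; apply/eigenvalueP.
case: (pickP (fun i => row i (Pm s) != 0)) => [i hi|h0]; last first.
  case/eqP: nz; apply/row_matrixP => i; move: (h0 i) => /negbFE/eqP ->.
  by rewrite row0.
exists (row i (Pm s)) => //.
by rewrite -row_mul mulmxE PHm -mulmxE mul_scalar_mx !rowE scalemxAr.
Qed.

Lemma P_of_eig l : eigenvalue (HL theta w) l -> exists s, l = (Er s)%:C.
Proof.
case/eigenvalueP => v hv nz.
have i0 : (0 < N)%N by rewrite expn_gt0.
pose X : M := \matrix_(i, j) v 0 j.
have rX i : row i X = v by apply/rowP => j; rewrite !mxE.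
have Xnz : X != 0.
  apply: contra nz => /eqP X0; rewrite -(rX (Ordinal i0)) X0 row0 //.
have XH : X *m HL theta w = l *: X.
  apply/row_matrixP => i; rewrite row_mul rX hv !rowE -scalemxAr -rowE rX //.
have [s hs] := @P_vec _ L bb cI hI hba hc hh hh2 X (enum 'I_L) (enum_uniq _) Xnz.
exists s.
have e1 : X * Pm s * HL theta w = (Er s)%:C *: (X * Pm s).
  by rewrite -mulrA PHm mulrA -(scal_comm _ X) -mulrA -!mulmxE mul_scalar_mx.
have e2 : X * Pm s * HL theta w = l *: (X * Pm s).
  by rewrite -mulrA HP_comm mulrA -!mulmxE XH scalemxAl.
move: e2; rewrite e1 => /eqP; rewrite -subr_eq0 -scalerBl scaler_eq0 (negbTE hs) orbF.
by rewrite subr_eq0 => /eqP.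
Qed.


Definition s0 : 'I_L -> bool := fun j => w j < 0.

Lemma Er_diff s : Er s - Er s0 = \sum_j (if s j == s0 j then 0 else 2 * `|w j|).
Proof.
rewrite /Er -sumrB; apply: eq_bigr => j _; rewrite /s0.
case: (s j); case: ltrP => h /=.
- by rewrite subrr.
- by rewrite (ger0_norm h); ring.
- by rewrite (ltr0_norm h); ring.
- by rewrite subrr.
Qed.

Lemma Er_ge s : Er s0 <= Er s.
Proof.
rewrite -subr_ge0 Er_diff; apply: sumr_ge0 => j _.
by case: (_ == _) => //; rewrite mulr_ge0.
Qed.

Lemma Er_gap s j : s j != s0 j -> Er s0 + 2 * `|w j| <= Er s.
Proof.
move=> hj; rewrite addrC -lerBrDr Er_diff (bigD1 j) //= (negbTE hj) lerDl.
apply: sumr_ge0 => i _.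
by case: (_ == _) => //; rewrite mulr_ge0.
Qed.

End Fin.


Arguments s0 {R L} w _.
Arguments Er {R L} w s.
Arguments Er_gap {R L w s j}.
Arguments Er_ge {R L} w s.
Arguments eig_of_P {R theta L w s}.
Arguments P_of_eig {R theta L w l}.

Lemma Pm_neq0 (R : realType) theta L s : Pm R theta L s != 0.
Proof.
exact: (P_neq0 (@hb2 R theta L) (@hba R theta L) (@hc R L) (@hh R L) (@hh2 R L) (@h10 R L) s (enum_uniq _)).
Qed.

Theorem proposition3p11 (R : realType) (gamma theta : R) :
  0 < gamma ->
  exists c : R, 0 < c /\
    forall (L : nat), (2 <= L)%N ->
    forall w : 'I_L -> R, (forall j, 2 * gamma <= `|w j|) ->
      spectral_gap_ge (HL theta w) c.
Proof.
move=> g0; exists gamma; split => // L L2 w hw.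
have gap : forall s j, s j != s0 w j -> Er w (s0 w) + gamma < Er w s.
  move=> s j hj; apply: (lt_le_trans _ (Er_gap hj)); rewrite ltrD2l.
  apply: (lt_le_trans _ (ler_wpM2l _ (hw j))) => //.
  lra.
exists ((Er w (s0 w))%:C)%C; split.
- split; first exact: eig_of_P (Pm_neq0 _ _ _ _).
  by move=> l /P_of_eig [s ->]; rewrite lecR Er_ge.
- have L0 : (0 < L)%N by apply: leq_trans L2.
  pose j0 := Ordinal L0.
  pose s1 := flip (s0 w) j0.
  have h1 : s1 j0 != s0 w j0 by rewrite /s1 /flip eqxx; case: (s0 w j0).
  exists ((Er w s1)%:C)%C; split; first exact: eig_of_P (Pm_neq0 _ _ _ _).
  apply/eqP => /complexI e; move: (gap _ _ h1); rewrite e.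
  lra.
- move=> l /P_of_eig [s ->] ne.
  rewrite -rmorphD lecR.
  case: (boolP [forall j, s j == s0 w j]) => [/forallP al|].
    case/eqP: ne; congr (_%:C)%C; rewrite /Er; apply: eq_bigr => j _.
    by rewrite (eqP (al j)).
  rewrite negb_forall => /existsP [j hj].
  exact: ltW (gap _ _ hj).
Qed.
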